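(* Let $J\subset\mathbb Z$ be a non-empty finite interval and let $n\ge 1$. Let $\tilde\xi_n^{J}$ be the unique polynomial of $\mathbb Q_p[x]$ of degree $<p^n|J|$ such that $\tilde\xi_n^{J}\equiv \xi_n^{(j)}/p \pmod{\omega_n^{(j)}}$ for every $j\in J$. Then $$\tilde\xi_n^{J}=(\ell_n^{J}\bmod \omega_{n-1}^{J})^{-1}\,\ell_n^{J},$$ $\tilde\xi_n^{J}\equiv 0\pmod{\omega_n^{J}/\omega_{n-1}^{J}}$ and $\tilde\xi_n^{J}\equiv 1\pmod{\omega_{n-1}^{J}}$, and $$p^{|J|}\le \|\tilde\xi_n^{J}\|_1\le p^{|J|+\beta(|J|)}.$$ Moreover, if $\beta(|J|)=0$, then $\tilde\xi_n^{J}/\ell_n^{J}$ is a unit of $\mathbb Z_p[[x]]$.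
   Context: Let $p$ be an odd prime and $u\in 1+p\mathbb Z_p$ with $u\neq 1$. For a polynomial $f\in\mathbb Q_p[x]$, $\|f\|_1$ is the maximum of the $p$-adic absolute values of its coefficients. For $f\in\mathbb Q_p[[x]]$ and $j\in\mathbb Z$ put $f^{(j)}(x)=f(u^{-j}(1+x)-1)$. Let $\omega_n=(1+x)^{p^n}-1$ for $n\ge0$, $\xi_n=\omega_n/\omega_{n-1}$ for $n\ge1$ and $\xi_0=px$. For a finite set $S\subset\mathbb Z$ of cardinality $|S|$, put $\omega_n^{S}=\prod_{j\in S}\omega_n^{(j)}$ and $\ell_n^{S}=\prod_{j\in S}\xi_n^{(j)}/p$. If $P,Q$ are coprime polynomials, $(P\bmod Q)^{-1}$ denotes the unique polynomial $R$ of degree $<\deg Q$ with $RP\equiv1\pmod Q$. Put $\beta(s)=\mathrm{ord}_p((s-1)!)$. *)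

(* Defs.v *)
From HB Require Import structures.
From mathcomp Require Import all_boot all_order all_algebra.
From mathcomp Require Import reals.
Set Implicit Arguments. Unset Strict Implicit. Unset Printing Implicit Defensive.
Import Order.TTheory GRing.Theory Num.Theory.
Local Open Scope ring_scope.

(* K with absolute value abs : K -> R is "Q_p" iff abs is a non-archimedean
   absolute value normalised by |p| = 1/p, K is complete for it, and Q is
   dense in K (i.e. K is the completion of Q for the p-adic absolute value). *)
Definition cauchy_seq (K : fieldType) (R : realType) (abs : K -> R)
  (s : nat -> K) : Prop :=
  forall eps : R, 0 < eps -> exists M : nat,
    forall m k : nat, (M <= m)%N -> (M <= k)%N -> abs (s m - s k) < eps.

Definition converges_to (K : fieldType) (R : realType) (abs : K -> R)
  (s : nat -> K) (l : K) : Prop :=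
  forall eps : R, 0 < eps -> exists M : nat,
    forall m : nat, (M <= m)%N -> abs (s m - l) < eps.

Definition is_Qp (p : nat) (K : fieldType) (R : realType) (abs : K -> R) : Prop :=
  [/\ (forall x : K, abs x = 0 <-> x = 0),
      (forall x : K, 0 <= abs x),
      (forall x y : K, abs (x * y) = abs x * abs y),
      (forall x y : K, abs (x + y) <= Num.max (abs x) (abs y))
    & [/\ abs (p%:R) = (p%:R)^-1,
      (forall s : nat -> K, cauchy_seq abs s -> exists l, converges_to abs s l)
    & (forall (x : K) (eps : R), 0 < eps ->
         exists q : rat, abs (x - ratr q) < eps)]].

Definition twist (K : fieldType) (u : K) (j : int) (f : {poly K}) : {poly K} :=
  f \Po ((u ^ (- j))%:P * ('X + 1) - 1).

Definition omega (K : fieldType) (p n : nat) : {poly K} :=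
  ('X + 1) ^+ (p ^ n) - 1.

Definition xi (K : fieldType) (p n : nat) : {poly K} :=
  if n is m.+1 then omega K p n %/ omega K p m else p%:R *: 'X.

Definition omegaS (K : fieldType) (p : nat) (u : K) (n : nat) (S : seq int)
  : {poly K} := \prod_(j <- S) twist u j (omega K p n).

Definition ellS (K : fieldType) (p : nat) (u : K) (n : nat) (S : seq int)
  : {poly K} := \prod_(j <- S) ((p%:R)^-1 *: twist u j (xi K p n)).

Definition Zinterval (a : int) (N : nat) : seq int :=
  [seq a + (k%:Z) | k <- iota 0 N].

(* R = (P mod Q)^{-1}: deg R < deg Q and R P = 1 mod Q *)
Definition is_inv_mod (K : fieldType) (P Q Rp : {poly K}) : Prop :=
  (size Rp < size Q)%N /\ Q %| (Rp * P - 1).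

Definition norm1 (K : fieldType) (R : realType) (abs : K -> R) (f : {poly K}) : R :=
  \big[Num.max/0]_(i < size f) abs f`_i.

Definition beta (p s : nat) : nat := logn p (s.-1)`!.

Definition ps_of_poly (K : fieldType) (f : {poly K}) : nat -> K := fun k => f`_k.

Definition psmul (K : fieldType) (a b : nat -> K) : nat -> K :=
  fun k => \sum_(i < k.+1) a i * b (k - i)%N.

Definition ps_one (K : fieldType) : nat -> K := fun k => if k == 0%N then 1 else 0.

(* coefficients in Z_p = {x | |x| <= 1} *)
Definition ps_integral (K : fieldType) (R : realType) (abs : K -> R)
  (a : nat -> K) : Prop := forall k, abs (a k) <= 1.

Definition ps_Zp_unit (K : fieldType) (R : realType) (abs : K -> R)
  (a : nat -> K) : Prop :=
  ps_integral abs a /\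
  exists b : nat -> K, ps_integral abs b /\ psmul a b = ps_one K.

(* Main.v *)
Require Import Defs.
From HB Require Import structures.
From mathcomp Require Import all_boot all_order all_algebra.
From mathcomp Require Import reals.
From mathcomp Require Import ring lra zify.
From Stdlib Require Import FunctionalExtensionality.
Set Implicit Arguments. Unset Strict Implicit. Unset Printing Implicit Defensive.
Import Order.TTheory GRing.Theory Num.Theory.
Local Open Scope ring_scope.
Section Newton.
Variable (K : fieldType).
Implicit Types (x f : nat -> K).

Fixpoint dd x f (k m : nat) : K :=
  match m with
  | 0 => f k
  | m'.+1 => (dd x f k.+1 m' - dd x f k m') / (x (k + m) - x k)
  end.

Definition nb x (k m : nat) : {poly K} := \prod_(l < m) ('X - (x (k + l)%N)%:P).

Definition newt x f (k m : nat) : {poly K} := \sum_(i < m.+1) dd x f k i *: nb x k i.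

Lemma size_nb x k m : size (nb x k m) = m.+1.
Proof. by rewrite /nb size_prod_XsubC /index_enum -enumT size_enum_ord. Qed.

Lemma monic_nb x k m : nb x k m \is monic.
Proof. by apply: monic_prod => i _; apply: monicXsubC. Qed.

Lemma nbS x k m : nb x k m.+1 = nb x k m * ('X - (x (k + m)%N)%:P).
Proof. by rewrite /nb big_ord_recr. Qed.

Lemma nb_root x k m j : (j < m)%N -> (nb x k m).[x (k + j)%N] = 0.
Proof.
move=> jm; rewrite /nb horner_prod (bigD1 (Ordinal jm)) //=.
by rewrite !hornerE subrr mul0r.
Qed.

Lemma newtS x f k m : newt x f k m.+1 = newt x f k m + dd x f k m.+1 *: nb x k m.+1.
Proof. by rewrite /newt big_ord_recr. Qed.

Lemma size_newt x f k m : (size (newt x f k m) <= m.+1)%N.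
Proof.
rewrite /newt; apply: (leq_trans (size_sum _ _ _)).
apply/bigmax_leqP => i _; apply: (leq_trans (size_scale_leq _ _)).
by rewrite size_nb.
Qed.

Lemma coef_newt x f k m : (newt x f k m)`_m = dd x f k m.
Proof.
elim: m => [|m IH]; first by rewrite /newt big_ord1 /nb big_ord0 alg_polyC coefC.
rewrite newtS coefD coefZ.
have -> : (newt x f k m)`_m.+1 = 0 by apply: nth_default; apply: size_newt.
have := monic_nb x k m.+1; rewrite monicE lead_coefE size_nb /= => /eqP ->.
by rewrite add0r mulr1.
Qed.

Lemma size_le_coef (q : {poly K}) n : (size q <= n.+1)%N -> q`_n = 0 -> (size q <= n)%N.
Proof.
move=> hs hc; rewrite leq_eqVlt in hs; case/orP: hs => [/eqP hs|]; last by [].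
have : lead_coef q = 0 by rewrite lead_coefE hs.
by move/eqP; rewrite lead_coef_eq0 => /eqP ->; rewrite size_poly0.
Qed.

Lemma newt_interp x f : injective x ->
  forall m k j, (j <= m)%N -> (newt x f k m).[x (k + j)%N] = f (k + j)%N.
Proof.
move=> xinj; elim=> [|m IH] k j jm.
  move: jm; rewrite leqn0 => /eqP ->.
  by rewrite /newt big_ord1 /nb big_ord0 alg_polyC hornerC addn0.
set A := newt x f k.+1 m; set B := newt x f k m.
set a := x k; set b := x (k + m.+1)%N.
have den0 : b - a != 0.
  by rewrite subr_eq0; apply/eqP => /xinj; rewrite -{2}(addn0 k) => /addnI.
set C := (b - a)^-1 *: (('X - a%:P) * A - ('X - b%:P) * B).
have Cev : forall j, (j <= m.+1)%N -> C.[x (k + j)%N] = f (k + j)%N.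
  move=> i im; rewrite /C hornerZ !hornerE.
  have [->|i0] := posnP i.
    have eB : B.[a] = f k by have := IH k 0%N (leq0n m); rewrite addn0.
    rewrite addn0 -/a subrr mul0r sub0r eB.
    by rewrite -mulNr opprB mulrA mulVf // mul1r.
  case: (ltnP i m.+1) => ilt.
    have eA : A.[x (k + i)%N] = f (k + i)%N.
      have -> : (k + i = k.+1 + i.-1)%N by rewrite addSn -addnS prednK.
      by rewrite /A IH // -ltnS prednK.
    have eB : B.[x (k + i)%N] = f (k + i)%N by rewrite /B IH.
    rewrite eA eB -mulrBl; set y := x (k + i)%N.
    have -> : y - a - (y - b) = b - a by ring.
    by rewrite mulrA mulVf // mul1r.
  have ei : i = m.+1 by apply/eqP; rewrite eqn_leq im ilt.
  rewrite ei -/b subrr mul0r subr0.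
  have -> : A.[b] = f (k + m.+1)%N.
    by rewrite /b /A -addSnnS (IH k.+1 m) // addSnnS.
  by rewrite mulrA mulVf // mul1r.
suff eC : newt x f k m.+1 = C by rewrite eC; apply: Cev.
apply/eqP; rewrite -subr_eq0; apply/eqP.
set D := C - newt x f k m.+1.
have sC : (size C <= m.+2)%N.
  rewrite /C; apply: (leq_trans (size_scale_leq _ _)).
  apply: (leq_trans (size_polyD _ _)); rewrite geq_max.
  have hA : (size A <= m.+1)%N := size_newt x f k.+1 m.
  have hB : (size B <= m.+1)%N := size_newt x f k m.
  rewrite size_polyN; apply/andP; split; apply: (leq_trans (size_polyMleq _ _));
    by rewrite size_XsubC add2n /= ltnS.
have sD : (size D <= m.+1)%N.
  apply: size_le_coef.
    apply: (leq_trans (size_polyD _ _)); rewrite geq_max sC size_polyN size_newt //.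
  rewrite /D coefB coef_newt /= /C coefZ coefB !mulrBl !coefB !coefXM !coefCM /=.
  have -> : A`_m.+1 = 0 by apply: nth_default; apply: size_newt.
  have -> : B`_m.+1 = 0 by apply: nth_default; apply: size_newt.
  rewrite /A /B !coef_newt !mulr0 !subr0 -/a -/b.
  by rewrite [X in X - _]mulrC mulrBl subrr.
apply/eqP; apply: contraT => Dnz.
have hall : all (root D) [seq x (k + j)%N | j <- iota 0 m.+1].
  apply/allP => y /mapP [i]; rewrite mem_iota add0n => ilt ->.
  rewrite /root /D hornerD hornerN Cev ?(ltnW ilt) // newtS hornerD hornerZ.
  by rewrite nb_root // mulr0 addr0 /B IH ?subrr // -ltnS.
have hu : uniq [seq x (k + j)%N | j <- iota 0 m.+1].
  rewrite map_inj_uniq ?iota_uniq // => i1 i2 /xinj; apply: addnI.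
have Dnz' : D != 0 by rewrite /D -oppr_eq0 opprB.
have := max_poly_roots Dnz' hall hu.
by rewrite size_map size_iota ltnNge sD.
Qed.

End Newton.
Section Geom.
Variable (K : fieldType).

Definition dg (q Q : K) (m : nat) : K := \prod_(l < m) ((Q / q ^+ l - 1) / (q ^+ l.+1 - 1)).

Lemma dd_geom (X0 q V0 Q : K) : X0 != 0 -> q != 0 -> (forall l, q ^+ l.+1 != 1) ->
  forall m k, dd (fun l => X0 * q ^+ l) (fun l => V0 * Q ^+ l) k m
     = V0 * Q ^+ k / (X0 ^+ m * q ^+ (k * m)) * dg q Q m.
Proof.
move=> X0nz qnz q1 m; elim: m => [|m IH] k.
  by rewrite /dg big_ord0 /= muln0 !expr0 !mulr1 invr1 mulr1.
rewrite /= !IH /dg big_ord_recr /=.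
set d := \prod_(i < m) _.
have e1 : X0 * q ^+ (k + m.+1) - X0 * q ^+ k = X0 * q ^+ k * (q ^+ m.+1 - 1).
  by rewrite exprD; ring.
rewrite e1 mulnS mulSn !exprD (exprS X0) (exprS Q).
have h1 : q ^+ m.+1 - 1 != 0 by rewrite subr_eq0.
have h2 : q ^+ k != 0 by rewrite expf_neq0.
have h3 : q ^+ m != 0 by rewrite expf_neq0.
have h4 : q ^+ (k * m) != 0 by rewrite expf_neq0.
have h5 : X0 ^+ m != 0 by rewrite expf_neq0.
move: h1 h2 h3 h4 h5; move: (q ^+ m.+1) (q ^+ k) (q ^+ m) (q ^+ (k * m)) (X0 ^+ m) (Q ^+ k).
move=> s1 s2 s3 s4 s5 s6 h1 h2 h3 h4 h5.
by field; rewrite h1 h2 h3 h4 h5 X0nz.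
Qed.

End Geom.
Section GenPoly.
Variable (K : fieldType).

Lemma dvdp_sumr (I : Type) (r : seq I) (P : pred I) (F : I -> {poly K}) d :
  (forall i, P i -> d %| F i) -> d %| \sum_(i <- r | P i) F i.
Proof.
move=> h; elim/big_rec: _ => [|i x Pi hx]; first by rewrite dvdp0.
by apply: dvdp_add => //; apply: h.
Qed.

Lemma dvdp_comp (d f g : {poly K}) : d %| f -> d \Po g %| f \Po g.
Proof. by move=> h; rewrite -(divpK h) comp_polyM dvdp_mull. Qed.

Lemma coprimep_prodr (f : {poly K}) (F : nat -> {poly K}) (s : seq nat) :
  (forall k, k \in s -> coprimep f (F k)) -> coprimep f (\prod_(k <- s) F k).
Proof.
elim: s => [|x s IH] h; first by rewrite big_nil coprimep1.
rewrite big_cons coprimepMr h ?mem_head //= IH // => k ks.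
by apply: h; rewrite in_cons ks orbT.
Qed.

Lemma prod_dvd (F : nat -> {poly K}) (s : seq nat) g : uniq s ->
  (forall k k', k \in s -> k' \in s -> k != k' -> coprimep (F k) (F k')) ->
  (forall k, k \in s -> F k %| g) -> \prod_(k <- s) F k %| g.
Proof.
elim: s => [|x s IH] us hc hd; first by rewrite big_nil dvd1p.
move: us => /= /andP [xs us].
rewrite big_cons Gauss_dvdp.
  rewrite hd ?mem_head //= IH // => [k k' ks k's|k ks].
    by apply: hc; rewrite in_cons ?ks ?k's orbT.
  by apply: hd; rewrite in_cons ks orbT.
apply: coprimep_prodr => k ks; apply: hc; rewrite ?mem_head ?in_cons ?ks ?orbT //.
by apply: contraNneq xs => ->.
Qed.

Lemma size_prod_const (F : nat -> {poly K}) (s : seq nat) d :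
  (forall k, k \in s -> size (F k) = d.+1) -> size (\prod_(k <- s) F k) = (size s * d).+1.
Proof.
elim: s => [|x s IH] h; first by rewrite big_nil size_poly1.
have hx : size (F x) = d.+1 by apply: h; rewrite mem_head.
have hs : size (\prod_(k <- s) F k) = (size s * d).+1.
  by apply: IH => k ks; apply: h; rewrite in_cons ks orbT.
rewrite big_cons size_mul ?hx ?hs //=; last 2 first.
- by rewrite -size_poly_eq0 hx.
- by rewrite -size_poly_eq0 hs.
by rewrite mulSn; lia.
Qed.

Lemma size_XaddC_exp m : size (('X + 1 : {poly K}) ^+ m) = m.+1.
Proof.
have -> : ('X + 1 : {poly K}) = 'X - (-1)%:P by rewrite polyCN opprK.
by rewrite size_exp_XsubC.
Qed.

Lemma size_cXm1 (c : K) m : c != 0 -> (0 < m)%N -> size (c *: ('X + 1) ^+ m - 1) = m.+1.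
Proof.
move=> c0 m0; rewrite size_polyDl size_scale // size_XaddC_exp //.
by rewrite size_polyN size_poly1 ltnS.
Qed.

Lemma coprime_lin (al be : K) (W : {poly K}) : al != be ->
  coprimep (al *: W - 1) (be *: W - 1).
Proof.
move=> ne; apply/Bezout_eq1_coprimepP.
have d0 : al - be != 0 by rewrite subr_eq0.
exists ((be / (al - be))%:P, (- (al / (al - be)))%:P) => /=.
have h : ((al - be)^-1)%:P * (al%:P - be%:P) = 1 :> {poly K}.
  by rewrite -polyCB -polyCM mulVf.
rewrite -!mul_polyC !polyCM polyCN polyCM.
transitivity (((al - be)^-1)%:P * (al%:P - be%:P)); last by [].
ring.
Qed.

End GenPoly.
Section Main.
Variables (p : nat) (K : fieldType) (R : realType) (abs : K -> R).
Hypotheses (hp : prime p) (hodd : odd p)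
  (abs0 : forall x, abs x = 0 <-> x = 0) (absge0 : forall x, 0 <= abs x)
  (absM : forall x y, abs (x * y) = abs x * abs y)
  (absD : forall x y, abs (x + y) <= Num.max (abs x) (abs y))
  (absp : abs p%:R = (p%:R)^-1).

Lemma abs00 : abs 0 = 0. Proof. by apply/abs0. Qed.

Lemma abs_eq0 x : (abs x == 0) = (x == 0).
Proof. by apply/eqP/eqP => /abs0. Qed.

Lemma abs1 : abs 1 = 1.
Proof.
have h : abs 1 * abs 1 = abs 1 by rewrite -absM mulr1.
have nz : abs 1 != 0 by rewrite abs_eq0 oner_eq0.
by apply: (mulfI nz); rewrite h mulr1.
Qed.

Lemma absN1 : abs (-1) = 1.
Proof.
have h : abs (-1) ^+ 2 = 1 by rewrite expr2 -absM mulrNN mulr1 abs1.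
by apply/eqP; rewrite -sqrp_eq1 ?absge0 // h.
Qed.

Lemma absN x : abs (- x) = abs x.
Proof. by rewrite -mulN1r absM absN1 mul1r. Qed.

Lemma absB x y : abs (x - y) = abs (y - x).
Proof. by rewrite -absN opprB. Qed.

Lemma absX x n : abs (x ^+ n) = abs x ^+ n.
Proof. elim: n => [|n IH]; by rewrite ?expr0 ?abs1 // !exprS absM IH. Qed.

Lemma absV x : abs (x^-1) = (abs x)^-1.
Proof.
have [->|nz] := eqVneq x 0; first by rewrite invr0 abs00 invr0.
have h : abs x * abs x^-1 = 1 by rewrite -absM mulfV // abs1.
have nz' : abs x != 0 by rewrite abs_eq0.
by rewrite -[abs x^-1]mul1r -(mulVf nz') -mulrA h mulr1.
Qed.

Lemma absDle x y B : abs x <= B -> abs y <= B -> abs (x + y) <= B.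
Proof. move=> hx hy; apply: le_trans (absD x y) _; by rewrite ge_max hx hy. Qed.

Lemma absBle x y B : abs x <= B -> abs y <= B -> abs (x - y) <= B.
Proof. by move=> hx hy; apply: absDle => //; rewrite absN. Qed.

Lemma abs_sum_le (I : Type) (r : seq I) (P : pred I) (F : I -> K) B :
  0 <= B -> (forall i, P i -> abs (F i) <= B) -> abs (\sum_(i <- r | P i) F i) <= B.
Proof.
move=> B0 h; elim/big_rec: _ => [|i x Pi hx]; first by rewrite abs00.
by apply: absDle => //; apply: h.
Qed.

Lemma abs_iso x y : abs y < abs x -> abs (x + y) = abs x.
Proof.
move=> lt; apply/eqP; rewrite eq_le; apply/andP; split.
  by apply: le_trans (absD x y) _; rewrite ge_max lexx ltW.
have := absD (x + y) (- y); rewrite addrK absN => h.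
have h' : (abs x <= abs (x + y)) || (abs x <= abs y) by rewrite -le_max.
case/orP: h' => // h'; by move: (le_lt_trans h' lt); rewrite ltxx.
Qed.

Lemma abs_iso' x y : abs y < abs x -> abs (y + x) = abs x.
Proof. by rewrite addrC; apply: abs_iso. Qed.

Lemma abs_nat_le1 n : abs n%:R <= 1.
Proof.
elim: n => [|n IH]; first by rewrite abs00 ler01.
by rewrite -addn1 natrD; apply: absDle => //; rewrite abs1.
Qed.

Lemma pR_gt1 : (1 : R) < p%:R.
Proof. by rewrite ltr1n prime_gt1. Qed.

Lemma pR_gt0 : (0 : R) < p%:R.
Proof. by rewrite ltr0n prime_gt0. Qed.

Lemma invp_lt1 : (p%:R : R)^-1 < 1.
Proof. by rewrite invf_lt1 ?pR_gt0 // pR_gt1. Qed.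

Lemma abs_coprime k : coprime p k -> abs k%:R = 1.
Proof.
move=> cop.
have [a _ dv] := Bezoutl k (prime_gt0 hp).
rewrite (eqP cop) in dv.
case/dvdnP: dv => b eb.
have e : (a%:R * k%:R : K) = b%:R * p%:R - 1.
  have e0 : (1 + a%:R * k%:R : K) = b%:R * p%:R by rewrite -!natrM -(natrD K 1) eb.
  by rewrite -e0; ring.
have h1 : abs (a%:R * k%:R) = 1.
  rewrite e -[X in abs X]opprB absN abs_iso; first by rewrite abs1.
  rewrite absN absM absp abs1.
  apply: (le_lt_trans _ invp_lt1).
  rewrite -[X in _ <= X]mul1r ler_wpM2r ?invr_ge0 ?ler0n ?abs_nat_le1 //.
apply/eqP; rewrite eq_le abs_nat_le1 /=.
move: h1; rewrite absM => h1.
rewrite -h1 -[X in _ <= X]mul1r ler_wpM2r ?absge0 ?abs_nat_le1 //.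
Qed.

Lemma abs_natp k : (0 < k)%N -> abs k%:R = (p%:R ^+ logn p k)^-1.
Proof.
move=> k0; have [m cop ek] := pfactor_coprime hp k0.
rewrite [in LHS]ek natrM absM abs_coprime // mul1r natrX absX absp.
by rewrite exprVn.
Qed.

Lemma abs_unit w : abs (w - 1) <= (p%:R)^-1 -> abs w = 1.
Proof.
move=> h; rewrite -(subrK 1 w) addrC abs_iso abs1 //.
exact: le_lt_trans h invp_lt1.
Qed.

Lemma abs_pow_sub1 w k : abs (w - 1) <= (p%:R)^-1 -> abs (w ^+ k - 1) <= abs (w - 1).
Proof.
move=> h; elim: k => [|k IH]; first by rewrite expr0 subrr abs00.
have -> : w ^+ k.+1 - 1 = w * (w ^+ k - 1) + (w - 1) by rewrite exprS; ring.
by apply: absDle => //; rewrite absM abs_unit // mul1r.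
Qed.

Lemma sum_p_abs w : abs (w - 1) <= (p%:R)^-1 ->
  abs (\sum_(i < p) w ^+ i) = (p%:R)^-1.
Proof.
move=> h.
have ew : \sum_(i < p) w ^+ i = p%:R + (w - 1) * \sum_(i < p) \sum_(r < i) w ^+ r.
  rewrite mulr_sumr -[X in X%:R](card_ord p) -sumr_const -big_split /=.
  by apply: eq_bigr => i _; rewrite -subrX1; ring.
have e2 : \sum_(i < p) \sum_(r < i) w ^+ r
     = (\sum_(i < p) (i : nat))%:R + \sum_(i < p) \sum_(r < i) (w ^+ r - 1).
  rewrite natr_sum -big_split /=; apply: eq_bigr => i _.
  by rewrite sumrB sumr_const card_ord addrC subrK.
have hC : abs ((\sum_(i < p) (i : nat))%:R) <= (p%:R)^-1.
  have eC : (\sum_(i < p) (i : nat))%N = (p * (p.-1)./2)%N by rewrite -bin2odd // -bin2_sum big_mkord.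
  rewrite eC natrM absM absp.
  rewrite -[X in _ <= X]mulr1 ler_wpM2l ?invr_ge0 ?ler0n ?abs_nat_le1 //.
have hS : abs (\sum_(i < p) \sum_(r < i) w ^+ r) <= (p%:R)^-1.
  rewrite e2; apply: absDle => //; apply: abs_sum_le => [|i _]; first by rewrite invr_ge0 ler0n.
  apply: abs_sum_le => [|r _]; first by rewrite invr_ge0 ler0n.
  by apply: le_trans (abs_pow_sub1 _ h) h.
rewrite ew abs_iso absp //.
rewrite absM; apply: (le_lt_trans (y := (p%:R)^-1 * (p%:R)^-1)).
  by apply: ler_pM => //.
by rewrite -[X in _ < X]mulr1 ltr_pM2l ?invr_gt0 ?ltr0n ?prime_gt0 // invp_lt1.
Qed.

Lemma sum_coprime_abs w k : coprime p k -> abs (w - 1) <= (p%:R)^-1 ->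
  abs (\sum_(i < k) w ^+ i) = 1.
Proof.
move=> cop h.
have -> : \sum_(i < k) w ^+ i = k%:R + \sum_(i < k) (w ^+ i - 1).
  by rewrite sumrB sumr_const card_ord addrC subrK.
rewrite abs_iso abs_coprime //.
apply: le_lt_trans invp_lt1.
apply: abs_sum_le => [|i _]; first by rewrite invr_ge0 ler0n.
by apply: le_trans (abs_pow_sub1 _ h) h.
Qed.

Lemma abs_powB w k : abs (w - 1) <= (p%:R)^-1 ->
  abs (w ^+ k - 1) = abs (k%:R) * abs (w - 1).
Proof.
move=> h; elim: k {-2}k (leqnn k) => [|N IH] k kN.
  by move: kN; rewrite leqn0 => /eqP ->; rewrite expr0 subrr abs00 mul0r.
have [k0|kpos] := posnP k; first by rewrite k0 expr0 subrr abs00 mul0r.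
case: (boolP (p %| k)%N) => dv.
  case/dvdnP: dv => k' ek.
  have k'lt : (k' <= N)%N.
    have p1 := prime_gt1 hp; nia.
  have e : w ^+ k - 1 = (w ^+ k' - 1) * \sum_(i < p) (w ^+ k') ^+ i.
    by rewrite -subrX1 -exprM ek.
  rewrite e absM sum_p_abs; last by apply: le_trans (abs_pow_sub1 _ h) h.
  by rewrite IH // ek natrM absM absp; ring.
have cop : coprime p k by rewrite prime_coprime.
by rewrite subrX1 absM sum_coprime_abs // abs_coprime // mulr1 mul1r.
Qed.


Definition pbnd (B : R) (f : {poly K}) := forall i, abs f`_i <= B.

Lemma pbnd0 B : 0 <= B -> pbnd B 0.
Proof. by move=> B0 i; rewrite coef0 abs00. Qed.

Lemma pbndD B f g : pbnd B f -> pbnd B g -> pbnd B (f + g).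
Proof. by move=> hf hg i; rewrite coefD; apply: absDle. Qed.

Lemma pbndN B f : pbnd B f -> pbnd B (- f).
Proof. by move=> hf i; rewrite coefN absN. Qed.

Lemma pbndB B f g : pbnd B f -> pbnd B g -> pbnd B (f - g).
Proof. by move=> hf hg; apply: pbndD => //; apply: pbndN. Qed.

Lemma pbndW B B' f : B <= B' -> pbnd B f -> pbnd B' f.
Proof. by move=> le hf i; apply: le_trans (hf i) le. Qed.

Lemma pbndZ B c f : pbnd B f -> pbnd (abs c * B) (c *: f).
Proof. by move=> hf i; rewrite coefZ absM ler_wpM2l. Qed.

Lemma pbndC B c : 0 <= B -> abs c <= B -> pbnd B c%:P.
Proof. by move=> B0 h i; rewrite coefC; case: (i == 0%N); rewrite ?abs00. Qed.

Lemma pbndX : pbnd 1 'X.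
Proof. by move=> i; rewrite coefX; case: (i == 1%N); rewrite ?abs1 ?abs00 ?ler01. Qed.

Lemma pbndM B1 B2 f g : 0 <= B1 -> 0 <= B2 -> pbnd B1 f -> pbnd B2 g -> pbnd (B1 * B2) (f * g).
Proof.
move=> h1 h2 hf hg i; rewrite coefM; apply: abs_sum_le; first by rewrite mulr_ge0.
by move=> j _; rewrite absM; apply: ler_pM.
Qed.

Lemma pbnd_sum (I : Type) (r : seq I) (P : pred I) (F : I -> {poly K}) B :
  0 <= B -> (forall i, P i -> pbnd B (F i)) -> pbnd B (\sum_(i <- r | P i) F i).
Proof.
move=> B0 h; elim/big_rec: _ => [|i x Pi hx]; first by apply: pbnd0.
by apply: pbndD => //; apply: h.
Qed.

Lemma pbnd_prod (I : Type) (r : seq I) (P : pred I) (F : I -> {poly K}) :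
  (forall i, P i -> pbnd 1 (F i)) -> pbnd 1 (\prod_(i <- r | P i) F i).
Proof.
move=> h; elim/big_rec: _ => [|i x Pi hx]; first by apply: pbndC; rewrite ?abs1 ?ler01.
by rewrite -[1 : R]mulr1; apply: pbndM; rewrite ?ler01 //; apply: h.
Qed.

Lemma pbndXn f n : pbnd 1 f -> pbnd 1 (f ^+ n).
Proof.
move=> hf; elim: n => [|n IH]; first by rewrite expr0; apply: pbndC; rewrite ?abs1 ?ler01.
by rewrite exprS -[1 : R]mulr1; apply: pbndM; rewrite ?ler01.
Qed.

Lemma pbnd_comp B f g : 0 <= B -> pbnd B f -> pbnd 1 g -> pbnd B (f \Po g).
Proof.
move=> B0 hf hg; rewrite comp_polyE; apply: pbnd_sum => // i _.
rewrite -[B]mulr1; apply: (pbndW (B := abs f`_i * 1)); first by rewrite ler_wpM2r.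
by apply: pbndZ; apply: pbndXn.
Qed.

Lemma norm1_ge0 (f : {poly K}) : 0 <= norm1 abs f.
Proof. by rewrite /norm1; elim/big_rec: _ => // i x _ hx; rewrite le_max hx orbT. Qed.

Lemma norm1_le B (f : {poly K}) : 0 <= B -> pbnd B f -> norm1 abs f <= B.
Proof. by move=> B0 hf; rewrite /norm1; apply: bigmax_le. Qed.

Lemma coef_le_norm1 (f : {poly K}) i : abs f`_i <= norm1 abs f.
Proof.
case: (ltnP i (size f)) => hi.
  by rewrite /norm1 (le_bigmax _ (fun j : 'I_(size f) => abs f`_j) (Ordinal hi)).
by rewrite nth_default // abs00 norm1_ge0.
Qed.

Lemma pbnd_norm1 (f : {poly K}) : pbnd (norm1 abs f) f.
Proof. by move=> i; apply: coef_le_norm1. Qed.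

Lemma pbnd_XaddC c : abs c <= 1 -> pbnd 1 ('X + c%:P).
Proof. by move=> h; apply: pbndD; [apply: pbndX | apply: pbndC; rewrite ?ler01]. Qed.


Variables (u : K) (a : int) (N n : nat).
Hypotheses (hu : abs (u - 1) <= (p%:R)^-1) (hu1 : u != 1) (hN : (1 <= N)%N) (hn : (1 <= n)%N).

Let Z : {poly K} := 'X + 1.
Let Q := (p ^ n.-1)%N.
Let P := (p ^ n)%N.
Let ui := u^-1.
Let ua := u ^ a.

Lemma PQ : P = (Q * p)%N.
Proof. by rewrite /P /Q -expnSr prednK. Qed.

Lemma Q_gt0 : (0 < Q)%N. Proof. by rewrite expn_gt0 prime_gt0. Qed.
Lemma P_gt0 : (0 < P)%N. Proof. by rewrite expn_gt0 prime_gt0. Qed.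

Lemma absu : abs u = 1. Proof. exact: abs_unit. Qed.
Lemma u0 : u != 0. Proof. by rewrite -abs_eq0 absu oner_eq0. Qed.
Lemma absui : abs ui = 1. Proof. by rewrite absV absu invr1. Qed.
Lemma absui1 : abs (ui - 1) = abs (u - 1).
Proof.
have -> : ui - 1 = - ui * (u - 1) by rewrite /ui mulrBr mulNr mulVf ?u0 // mulr1; ring.
by rewrite absM absN absui mul1r.
Qed.
Lemma hui : abs (ui - 1) <= (p%:R)^-1. Proof. by rewrite absui1. Qed.

Lemma absua : abs ua = 1.
Proof.
rewrite /ua; case: a => k; first by rewrite -exprnP absX absu expr1n.
by rewrite NegzE -exprnN absV absX absu expr1n invr1.
Qed.
Lemma ua0 : ua != 0. Proof. by rewrite -abs_eq0 absua oner_eq0. Qed.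

Lemma abs_powB_u w k : abs (w - 1) <= (p%:R)^-1 -> abs (w ^+ k - 1) = abs (k%:R) * abs (w - 1).
Proof. exact: abs_powB. Qed.

Lemma abs_nat_ne0 k : (0 < k)%N -> abs (k%:R : K) != 0.
Proof. by move=> k0; rewrite abs_natp // invr_eq0 expf_neq0 // pnatr_eq0 -lt0n prime_gt0. Qed.

Lemma u_pow_ne1 k : (0 < k)%N -> u ^+ k != 1.
Proof.
move=> k0; rewrite -subr_eq0 -abs_eq0 abs_powB // mulf_neq0 ?abs_nat_ne0 //.
by rewrite abs_eq0 subr_eq0.
Qed.

Lemma ui_pow_ne1 k : (0 < k)%N -> ui ^+ k != 1.
Proof. by move=> k0; rewrite /ui exprVn invr_eq1 u_pow_ne1. Qed.

Definition cc (k : nat) : K := ua^-1 * ui ^+ k.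

Lemma cc_eq k : u ^ (- (a + k%:Z)) = cc k.
Proof.
rewrite opprD expfzDr ?u0 // -invr_expz -exprnN /cc /ua /ui; congr (_ * _).
by rewrite exprVn.
Qed.

Lemma abscc k : abs (cc k) = 1.
Proof. by rewrite /cc absM absV absua absX absui invr1 expr1n mulr1. Qed.

Lemma cc0 k : cc k != 0. Proof. by rewrite -abs_eq0 abscc oner_eq0. Qed.

Definition yy (k : nat) : {poly K} := ((cc k)%:P * Z) ^+ Q.

Lemma comp_omega (g : {poly K}) m : omega K p m \Po g = (g + 1) ^+ (p ^ m) - 1.
Proof. by rewrite /omega rmorphB rmorphXn rmorphD /= comp_polyX comp_polyC rmorph1. Qed.

Lemma twist_omega_n1 k : twist u (a + k%:Z) (omega K p n.-1) = yy k - 1.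
Proof. by rewrite /twist comp_omega cc_eq subrK. Qed.

Lemma twist_omega_n k : twist u (a + k%:Z) (omega K p n) = yy k ^+ p - 1.
Proof. by rewrite /twist comp_omega cc_eq subrK /yy -exprM -PQ. Qed.

Lemma xi_eq : xi K p n = \sum_(i < p) (Z ^+ Q) ^+ i.
Proof.
have -> : xi K p n = omega K p n %/ omega K p n.-1 by rewrite /xi; case: (n) hn.
have -> : omega K p n = omega K p n.-1 * \sum_(i < p) (Z ^+ Q) ^+ i.
  by rewrite /omega -/Q -subrX1 -exprM -PQ.
rewrite mulKp // /omega subr_eq0; apply/eqP => e.
have := congr1 (fun f : {poly K} => size f) e.
rewrite size_poly1 -/Z.
have -> : Z = 'X - (-1)%:P by rewrite /Z polyCN opprK.
rewrite size_exp_XsubC => -[] /eqP; rewrite expn_eq0 => /andP [/eqP p0]; by move: hp; rewrite p0.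
Qed.

Lemma twist_xi k : twist u (a + k%:Z) (xi K p n) = \sum_(i < p) yy k ^+ i.
Proof.
rewrite /twist xi_eq rmorph_sum /=; apply: eq_bigr => i _.
by rewrite rmorphXn rmorphXn rmorphD /= comp_polyX comp_polyC rmorph1 subrK cc_eq.
Qed.

Lemma yy_expr k i : yy k ^+ i = ((cc k ^+ Q) ^+ i) *: (Z ^+ Q) ^+ i.
Proof. by rewrite /yy -mul_polyC !rmorphXn /= -!exprMn. Qed.


Let W : {poly K} := (Z ^+ Q) ^+ p.
Let X0 : K := (ua ^+ Q) ^+ p.
Let qq : K := (u ^+ Q) ^+ p.
Definition xw (l : nat) : K := X0 * qq ^+ l.
Definition V0 (i : nat) : K := (p%:R)^-1 * ((ua^-1 ^+ Q) ^+ i).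
Definition Qv (i : nat) : K := (ui ^+ Q) ^+ i.
Definition vals (i : nat) (l : nat) : K := V0 i * Qv i ^+ l.
Definition TT (i : nat) : {poly K} := newt xw (vals i) 0 N.-1.
Definition tt : {poly K} := \sum_(i < p) (Z ^+ Q) ^+ i * (TT i \Po W).

Lemma qq_eq : qq = u ^+ P. Proof. by rewrite /qq -exprM -PQ. Qed.

Lemma xw_eq k : xw k = ((ua * u ^+ k) ^+ Q) ^+ p.
Proof. rewrite /xw /X0 /qq !exprMn; congr (_ * _); rewrite -!exprM; congr (_ ^+ _); nia. Qed.

Lemma cc_xw k : ((cc k ^+ Q) ^+ p) * xw k = 1.
Proof.
rewrite xw_eq -exprMn -exprMn /cc /ui.
have -> : ua^-1 * u^-1 ^+ k * (ua * u ^+ k) = 1.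
  by rewrite exprVn mulrACA mulVf ?ua0 // mulVf ?expf_neq0 ?u0 // mulr1.
by rewrite !expr1n.
Qed.

Lemma vals_eq i k : vals i k = (p%:R)^-1 * ((cc k ^+ Q) ^+ i).
Proof.
rewrite /vals /V0 /Qv /cc -mulrA; congr (_ * _).
rewrite !exprMn; congr (_ * _); rewrite -!exprM; congr (_ ^+ _); nia.
Qed.

Lemma xw_inj : injective xw.
Proof.
have X00 : X0 != 0 by rewrite /X0 !expf_neq0 ?ua0.
have qq0 : qq != 0 by rewrite qq_eq expf_neq0 ?u0.
have key : forall l d, xw l = xw (l + d.+1) -> False.
  move=> l d; rewrite /xw exprD mulrA => /eqP; rewrite -subr_eq0 -{1}(mulr1 (X0 * qq ^+ l)) -mulrBr.
  rewrite mulf_eq0 mulf_eq0 (negPf X00) expf_eq0 (negPf qq0) andbF /= subr_eq0 eq_sym.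
  by rewrite qq_eq -exprM (negPf (u_pow_ne1 _)) // muln_gt0 P_gt0.
move=> l l' e; case: (ltngtP l l') => // h.
  by exfalso; apply: (key l (l' - l).-1); rewrite e prednK ?subn_gt0 // subnKC // ltnW.
by exfalso; apply: (key l' (l - l').-1); rewrite -e prednK ?subn_gt0 // subnKC // ltnW.
Qed.

Lemma TT_interp i l : (l < N)%N -> (TT i).[xw l] = vals i l.
Proof.
move=> lN; rewrite /TT -(add0n l) newt_interp //; first exact: xw_inj.
by rewrite -ltnS prednK.
Qed.

Lemma yy_p k : yy k ^+ p - 1 = ((cc k ^+ Q) ^+ p) *: (('X - (xw k)%:P) \Po W).
Proof.
by rewrite yy_expr rmorphB /= comp_polyX comp_polyC scalerBr scale_polyC cc_xw.
Qed.

Lemma cong_tt k : (k < N)%N ->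
  twist u (a + k%:Z) (omega K p n) %| tt - (p%:R)^-1 *: twist u (a + k%:Z) (xi K p n).
Proof.
move=> kN; rewrite twist_omega_n twist_xi yy_p dvdpZl ?expf_neq0 ?cc0 //.
rewrite scaler_sumr /tt -sumrB; apply: dvdp_sumr => i _.
rewrite yy_expr scalerA -vals_eq -TT_interp // -mul_polyC [_ * Z ^+ Q ^+ i]mulrC -mulrBr.
apply: dvdp_mull.
have -> : (TT i \Po W) - ((TT i).[xw k])%:P = (TT i - ((TT i).[xw k])%:P) \Po W.
  by rewrite rmorphB /= comp_polyC.
apply: dvdp_comp; rewrite dvdp_XsubCl /root hornerD hornerN hornerC subrr //.
Qed.


Variable (t : {poly K}).
Hypotheses (ht_deg : (size t <= p ^ n * N)%N)
  (ht_cong : forall j, j \in Zinterval a N ->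
      twist u j (omega K p n) %| (t - (p%:R)^-1 *: twist u j (xi K p n))).

Lemma ht_cong' k : (k < N)%N ->
  twist u (a + k%:Z) (omega K p n) %| t - (p%:R)^-1 *: twist u (a + k%:Z) (xi K p n).
Proof.
move=> kN; apply: ht_cong; rewrite /Zinterval.
by apply: (map_f (fun k : nat => a + k%:Z)); rewrite mem_iota.
Qed.

Lemma prodJ (F : int -> {poly K}) :
  \prod_(j <- Zinterval a N) F j = \prod_(k <- iota 0 N) F (a + k%:Z).
Proof. by rewrite /Zinterval big_map. Qed.

Definition gam (k : nat) : K := (cc k ^+ Q) ^+ p.

Lemma gam_xw k : gam k * xw k = 1. Proof. exact: cc_xw. Qed.

Lemma gam0 k : gam k != 0. Proof. by rewrite /gam !expf_neq0 ?cc0. Qed.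

Lemma om_n_eq k : twist u (a + k%:Z) (omega K p n) = gam k *: W - 1.
Proof. by rewrite twist_omega_n yy_expr. Qed.

Lemma W_eq : W = Z ^+ P. Proof. by rewrite /W -exprM -PQ. Qed.

Lemma size_om_n k : size (twist u (a + k%:Z) (omega K p n)) = P.+1.
Proof. by rewrite om_n_eq W_eq size_cXm1 ?gam0 ?P_gt0. Qed.

Lemma size_om_n1 k : size (twist u (a + k%:Z) (omega K p n.-1)) = Q.+1.
Proof.
rewrite twist_omega_n1 -(expr1 (yy k)) yy_expr expr1 size_cXm1 ?Q_gt0 //.
by rewrite expf_neq0 ?cc0.
Qed.

Lemma om_coprime k k' : k != k' ->
  coprimep (twist u (a + k%:Z) (omega K p n)) (twist u (a + k'%:Z) (omega K p n)).
Proof.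
move=> ne; rewrite !om_n_eq; apply: coprime_lin; apply: contra ne => /eqP e.
apply/eqP/xw_inj.
have h1 := gam_xw k; have h2 := gam_xw k'; rewrite e in h1.
by apply: (mulfI (gam0 k')); rewrite h1 h2.
Qed.

Lemma size_tt : (size tt <= P * N)%N.
Proof.
rewrite /tt; apply: (leq_trans (size_sum _ _ _)); apply/bigmax_leqP => i _.
apply: (leq_trans (size_polyMleq _ _)).
rewrite -exprM size_XaddC_exp.
have hT : (size (TT i \Po W) <= (N.-1 * P).+1)%N.
  apply: (leq_trans (size_comp_poly_leq _ _)).
  rewrite W_eq size_XaddC_exp /= ltnS leq_mul2r.
  have := size_newt xw (vals i) 0 N.-1; rewrite -/(TT i) => h.
  by apply/orP; right; move: h; case: (size (TT i)) => //= s h.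
have hi : (i < p)%N := ltn_ord i.
have Q0 := Q_gt0; have hP := PQ.
move: hT; set s := size _ => hT.
rewrite /=; nia.
Qed.

Lemma t_eq : t = tt.
Proof.
apply/eqP; rewrite -subr_eq0; apply/eqP.
set D := t - tt.
have hd : \prod_(k <- iota 0 N) twist u (a + k%:Z) (omega K p n) %| D.
  apply: prod_dvd; first exact: iota_uniq.
    by move=> k k' _ _; apply: om_coprime.
  move=> k; rewrite mem_iota add0n => kN.
  have -> : D = (t - (p%:R)^-1 *: twist u (a + k%:Z) (xi K p n))
             - (tt - (p%:R)^-1 *: twist u (a + k%:Z) (xi K p n)) by rewrite /D; ring.
  by apply: dvdp_sub; [apply: ht_cong' | apply: cong_tt].
apply/eqP; apply: contraT => Dnz.
have := dvdp_leq Dnz hd.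
rewrite (size_prod_const (d := P)) ?size_iota; last by move=> k _; apply: size_om_n.
have : (size D <= P * N)%N.
  apply: (leq_trans (size_polyD _ _)); rewrite geq_max size_polyN size_tt andbT.
  by rewrite /P.
by move=> h1 h2; have := leq_trans h2 h1; rewrite mulnC ltnn.
Qed.


Lemma pK0 : (p%:R : K) != 0.
Proof. by rewrite -abs_eq0 absp invr_eq0 pnatr_eq0 -lt0n prime_gt0. Qed.

Lemma pKi0 : (p%:R : K)^-1 != 0. Proof. by rewrite invr_eq0 pK0. Qed.

Definition xiT (k : nat) : {poly K} := twist u (a + k%:Z) (xi K p n).
Definition om1 (k : nat) : {poly K} := twist u (a + k%:Z) (omega K p n.-1).
Definition omn (k : nat) : {poly K} := twist u (a + k%:Z) (omega K p n).

Lemma om_split k : omn k = om1 k * xiT k.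
Proof. by rewrite /omn /om1 /xiT twist_omega_n twist_omega_n1 twist_xi subrX1. Qed.

Lemma omn0 k : omn k != 0. Proof. by rewrite -size_poly_eq0 /omn size_om_n. Qed.
Lemma om10 k : om1 k != 0. Proof. by rewrite -size_poly_eq0 /om1 size_om_n1. Qed.
Lemma xiT0 k : xiT k != 0.
Proof. by have := omn0 k; rewrite om_split mulf_eq0 negb_or => /andP []. Qed.

Lemma size_xiT k : size (xiT k) = (P - Q).+1.
Proof.
have := size_om_n k; rewrite -/(omn k) om_split size_mul ?om10 ?xiT0 //.
rewrite /om1 size_om_n1 /= => e.
have hP := PQ; have Q0 := Q_gt0; have p1 := prime_gt1 hp.
move: e; set s := size _ => e; nia.
Qed.

Lemma xiT_dvd_omn k : xiT k %| omn k. Proof. by rewrite om_split dvdp_mull. Qed.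
Lemma om1_dvd_omn k : om1 k %| omn k. Proof. by rewrite om_split dvdp_mulr. Qed.

Lemma xiT_dvd_t k : (k < N)%N -> xiT k %| t.
Proof.
move=> kN.
have h1 : xiT k %| t - (p%:R)^-1 *: xiT k := dvdp_trans (xiT_dvd_omn k) (ht_cong' kN).
have -> : t = (t - (p%:R)^-1 *: xiT k) + (p%:R)^-1 *: xiT k by rewrite subrK.
by apply: dvdp_add => //; rewrite dvdpZr ?pKi0.
Qed.

Lemma om1_dvd_t1 k : (k < N)%N -> om1 k %| t - 1.
Proof.
move=> kN.
have h1 : om1 k %| t - (p%:R)^-1 *: xiT k := dvdp_trans (om1_dvd_omn k) (ht_cong' kN).
have -> : t - 1 = (t - (p%:R)^-1 *: xiT k) + (p%:R)^-1 *: (xiT k - (p%:R)%:P).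
  rewrite scalerBr scale_polyC mulVf ?pK0 //; ring.
apply: dvdp_add => //; rewrite dvdpZr ?pKi0 //.
have -> : xiT k - (p%:R)%:P = \sum_(i < p) (yy k ^+ i - 1).
  by rewrite sumrB sumr_const card_ord /xiT twist_xi -[in RHS]polyC1 -polyCMn.
apply: dvdp_sumr => i _; rewrite subrX1 /om1 twist_omega_n1; exact: dvdp_mulr.
Qed.

Lemma omn_coprime k k' : k != k' -> coprimep (omn k) (omn k').
Proof. exact: om_coprime. Qed.

Lemma xiT_coprime k k' : k != k' -> coprimep (xiT k) (xiT k').
Proof.
move=> ne; apply: (coprimep_dvdr (xiT_dvd_omn k)); apply: (coprimep_dvdl (xiT_dvd_omn k')).
exact: om_coprime.
Qed.

Lemma om1_coprime k k' : k != k' -> coprimep (om1 k) (om1 k').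
Proof.
move=> ne; apply: (coprimep_dvdr (om1_dvd_omn k)); apply: (coprimep_dvdl (om1_dvd_omn k')).
exact: om_coprime.
Qed.

Let ell : {poly K} := \prod_(k <- iota 0 N) ((p%:R)^-1 *: xiT k).
Let Om1 : {poly K} := \prod_(k <- iota 0 N) om1 k.
Let XiP : {poly K} := \prod_(k <- iota 0 N) xiT k.

Lemma ellS_eq : ellS p u n (Zinterval a N) = ell.
Proof. by rewrite /ellS prodJ. Qed.
Lemma omegaS1_eq : omegaS p u n.-1 (Zinterval a N) = Om1.
Proof. by rewrite /omegaS prodJ. Qed.
Lemma omegaS_eq : omegaS p u n (Zinterval a N) = Om1 * XiP.
Proof. by rewrite /omegaS prodJ /Om1 /XiP -big_split /=; apply: eq_bigr => k _; rewrite -om_split. Qed.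

Lemma ell_dvd_t : ell %| t.
Proof.
apply: prod_dvd; first exact: iota_uniq.
  by move=> k k' _ _ ne; rewrite coprimepZl ?coprimepZr ?pKi0 // xiT_coprime.
by move=> k; rewrite mem_iota add0n => kN; rewrite dvdpZl ?pKi0 // xiT_dvd_t.
Qed.

Lemma XiP_dvd_t : XiP %| t.
Proof.
apply: prod_dvd; first exact: iota_uniq.
  by move=> k k' _ _ ne; rewrite xiT_coprime.
by move=> k; rewrite mem_iota add0n => kN; rewrite xiT_dvd_t.
Qed.

Lemma Om1_dvd_t1 : Om1 %| t - 1.
Proof.
apply: prod_dvd; first exact: iota_uniq.
  by move=> k k' _ _ ne; rewrite om1_coprime.
by move=> k; rewrite mem_iota add0n => kN; rewrite om1_dvd_t1.
Qed.

Lemma size_ell : size ell = (N * (P - Q)).+1.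
Proof.
by rewrite (size_prod_const (d := (P - Q)%N)) ?size_iota // => k _; rewrite size_scale ?pKi0 ?size_xiT.
Qed.

Lemma size_Om1 : size Om1 = (N * Q).+1.
Proof. by rewrite (size_prod_const (d := Q)) ?size_iota // => k _; rewrite /om1 size_om_n1. Qed.

Definition Rp : {poly K} := t %/ ell.

Lemma t_Rp : t = Rp * ell.
Proof. by rewrite /Rp divpK // ell_dvd_t. Qed.

Lemma size_Rp : (size Rp < size Om1)%N.
Proof.
rewrite size_Om1 ltnS.
have [->|Rnz] := eqVneq Rp 0; first by rewrite size_poly0.
have ell0 : ell != 0 by rewrite -size_poly_eq0 size_ell.
have := ht_deg; rewrite t_Rp size_mul // size_ell -/P.
have hP := PQ; have Q0 := Q_gt0; have p1 := prime_gt1 hp.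
move: (size Rp) => s h; nia.
Qed.

Lemma part1 : exists Rp0 : {poly K},
  is_inv_mod (ellS p u n (Zinterval a N)) (omegaS p u n.-1 (Zinterval a N)) Rp0 /\
  t = Rp0 * ellS p u n (Zinterval a N).
Proof.
exists Rp; rewrite ellS_eq omegaS1_eq; split; last exact: t_Rp.
by split; [exact: size_Rp | rewrite -t_Rp; exact: Om1_dvd_t1].
Qed.

Lemma part2 : (omegaS p u n (Zinterval a N) %/ omegaS p u n.-1 (Zinterval a N)) %| t.
Proof.
have Om10 : Om1 != 0 by rewrite -size_poly_eq0 size_Om1.
by rewrite omegaS_eq omegaS1_eq mulKp // XiP_dvd_t.
Qed.

Lemma part3 : omegaS p u n.-1 (Zinterval a N) %| (t - 1).
Proof. by rewrite omegaS1_eq Om1_dvd_t1. Qed.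


Let pr : R := p%:R.

Lemma abs_prod (I : Type) (r : seq I) (Pp : pred I) (F : I -> K) :
  abs (\prod_(i <- r | Pp i) F i) = \prod_(i <- r | Pp i) abs (F i).
Proof. by apply: (big_morph abs absM abs1). Qed.

Lemma fact_dvd m k : (m <= k)%N -> (m`! %| k`!)%N.
Proof.
elim: k => [|k IH]; first by rewrite leqn0 => /eqP ->.
rewrite leq_eqVlt => /orP [/eqP ->|h]; first by [].
by rewrite factS dvdn_mull // IH.
Qed.

Lemma pr_gt0 : 0 < pr. Proof. exact: pR_gt0. Qed.

Lemma abs_pinv : abs ((p%:R : K)^-1) = pr. Proof. by rewrite absV absp invrK. Qed.

Lemma abs_u1_ne0 : abs (u - 1) != 0. Proof. by rewrite abs_eq0 subr_eq0. Qed.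

Lemma abs_dg_term i l : abs ((Qv i / qq ^+ l - 1) / (qq ^+ l.+1 - 1))
   = abs ((i + p * l)%:R) * pr / abs ((l.+1)%:R).
Proof.
have e1 : Qv i / qq ^+ l = ui ^+ (Q * (i + p * l)).
  rewrite /Qv qq_eq -!exprM -exprVn -/ui -exprD; congr (_ ^+ _).
  by rewrite PQ; nia.
have e2 : qq ^+ l.+1 = u ^+ (Q * p * l.+1) by rewrite qq_eq -exprM PQ.
rewrite e1 e2 absM absV abs_powB ?hui // absui1 abs_powB //.
rewrite !natrM !absM absp.
have hQ := abs_nat_ne0 Q_gt0; have hl := abs_nat_ne0 (ltn0Sn l); have he := abs_u1_ne0.
rewrite /pr; move: hQ hl he; move: (abs (Q%:R)) (abs (l.+1)%:R) (abs (u - 1)) => x y z hx hy hz.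
have hp0 : (p%:R : R) != 0 by rewrite pnatr_eq0 -lt0n prime_gt0.
by field; rewrite hx hy hz hp0.
Qed.

Lemma X00 : X0 != 0. Proof. by rewrite /X0 !expf_neq0 ?ua0. Qed.
Lemma qq0 : qq != 0. Proof. by rewrite qq_eq expf_neq0 ?u0. Qed.
Lemma qq1 l : qq ^+ l.+1 != 1.
Proof. by rewrite qq_eq -exprM u_pow_ne1 // muln_gt0 P_gt0. Qed.

Lemma abs_dd i m : abs (dd xw (vals i) 0 m)
   = pr * \prod_(l < m) (abs ((i + p * l)%:R) * pr / abs ((l.+1)%:R)).
Proof.
have := dd_geom (V0 i) (Qv i) X00 qq0 qq1 m 0.
rewrite /xw /vals => ->.
rewrite expr0 mul0n expr0 mulr1 mulr1 /dg absM abs_prod absM absV absX.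
rewrite /X0 !absX absua !expr1n invr1 mulr1 /V0 absM abs_pinv !absX absV absua invr1 !expr1n mulr1.
by congr (_ * _); apply: eq_bigr => l _; rewrite abs_dg_term.
Qed.

Lemma prod_abs_fact m : \prod_(l < m) abs ((l.+1)%:R : K) = abs ((m`!)%:R).
Proof.
elim: m => [|m IH]; first by rewrite big_ord0 fact0 abs1.
by rewrite big_ord_recr /= IH factS natrM absM mulrC.
Qed.

Lemma prod_bound m : \prod_(l < m) (pr / abs ((l.+1)%:R : K)) = pr ^+ (m + logn p m`!).
Proof.
rewrite big_split /= prodr_const card_ord prodfV prod_abs_fact abs_natp ?fact_gt0 //.
by rewrite invrK exprD.
Qed.

Lemma abs_dd_le i m : abs (dd xw (vals i) 0 m) <= pr ^+ (m.+1 + logn p m`!).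
Proof.
rewrite abs_dd addSn exprS ler_wpM2l ?ler0n // -prod_bound.
apply: ler_prod => l _; apply/andP; split.
  by rewrite !mulr_ge0 ?invr_ge0 ?ler0n.
rewrite -[X in _ <= X]mul1r mulrA ler_wpM2r ?invr_ge0 //.
by rewrite ler_wpM2r ?ler0n ?abs_nat_le1.
Qed.

Lemma abs_dd_eq m : abs (dd xw (vals p.-1) 0 m) = pr ^+ (m.+1 + logn p m`!).
Proof.
rewrite abs_dd addSn exprS -prod_bound; congr (_ * _); apply: eq_bigr => l _.
rewrite abs_coprime ?mul1r //.
rewrite prime_coprime //; apply/negP => dv.
have : (p %| p.-1)%N by rewrite -(dvdn_addr _ (dvdn_mulr l (dvdnn p))) addnC.
have p1 := prime_gt1 hp.
have p0 : (0 < p.-1)%N by rewrite -ltnS prednK // prime_gt0.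
move/(dvdn_leq p0); rewrite leqNgt.
by rewrite -{2}(prednK (prime_gt0 hp)) ltnSn.
Qed.


Let Bnd : R := pr ^+ (N + beta p N).

Lemma dd_le_B i m : (m < N)%N -> abs (dd xw (vals i) 0 m) <= Bnd.
Proof.
move=> mN; apply: (le_trans (abs_dd_le i m)).
rewrite /Bnd /beta ler_eXn2l ?pR_gt1 //.
apply: leq_add => //; apply: dvdn_leq_log; first exact: fact_gt0.
by apply: fact_dvd; rewrite -ltnS prednK.
Qed.

Lemma absxw l : abs (xw l) = 1.
Proof. by rewrite /xw /X0 /qq absM !absX absua absu !expr1n mulr1. Qed.

Lemma pbnd_nb m : pbnd 1 (nb xw 0 m).
Proof.
rewrite /nb; apply: pbnd_prod => l _; apply: pbndB; first exact: pbndX.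
by apply: pbndC; rewrite ?ler01 // absxw.
Qed.

Lemma Bnd_ge0 : 0 <= Bnd. Proof. by rewrite /Bnd exprn_ge0 ?ler0n. Qed.

Lemma pbnd_TT i : pbnd Bnd (TT i).
Proof.
rewrite /TT /newt; apply: pbnd_sum => [|m _]; first exact: Bnd_ge0.
rewrite -[Bnd]mulr1; apply: (pbndW (B := abs (dd xw (vals i) 0 m) * 1)).
  rewrite ler_wpM2r ?ler01 //; apply: dd_le_B.
  by have := ltn_ord m; rewrite {2}(prednK hN).
by apply: pbndZ; apply: pbnd_nb.
Qed.

Definition tt2 : {poly K} := \sum_(i < p) 'X^(Q * i) * (TT i \Po 'X^P).

Lemma tt2_comp : tt2 \Po Z = tt.
Proof.
rewrite /tt2 /tt rmorph_sum /=; apply: eq_bigr => i _.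
by rewrite rmorphM /= comp_Xn_poly -comp_polyA comp_Xn_poly -W_eq exprM.
Qed.

Lemma pbndZ1 : pbnd 1 Z.
Proof. by apply: pbnd_XaddC; rewrite abs1. Qed.

Lemma norm_upper : norm1 abs t <= Bnd.
Proof.
apply: norm1_le; first exact: Bnd_ge0.
rewrite t_eq -tt2_comp; apply: pbnd_comp; [exact: Bnd_ge0| |exact: pbndZ1].
apply: pbnd_sum => [|i _]; first exact: Bnd_ge0.
rewrite -[Bnd]mul1r; apply: pbndM; rewrite ?ler01 ?Bnd_ge0 //.
  by apply: pbndXn; apply: pbndX.
apply: pbnd_comp; [exact: Bnd_ge0|exact: pbnd_TT|].
by apply: pbndXn; apply: pbndX.
Qed.

Lemma tt2_eq : tt2 = t \Po ('X - 1).
Proof.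
rewrite t_eq -tt2_comp -comp_polyA.
have -> : Z \Po ('X - 1) = 'X by rewrite /Z rmorphD /= comp_polyX comp_polyC subrK.
by rewrite comp_polyXr.
Qed.

Lemma coef_tt2 : tt2`_(Q * p.-1 + P * N.-1) = dd xw (vals p.-1) 0 N.-1.
Proof.
have pp : (p.-1 < p)%N by rewrite prednK ?prime_gt0.
rewrite /tt2 coef_sum (bigD1 (Ordinal pp)) //= big1 ?addr0.
  rewrite coefXnM ltnNge leq_addr /= addKn coef_comp_poly_Xn ?P_gt0 //.
  by rewrite dvdn_mulr // mulKn ?P_gt0 // /TT coef_newt.
move=> i ne; apply: nth_default.
apply: (leq_trans (size_polyMleq _ _)); rewrite size_polyXn.
have hT : (size (TT i \Po 'X^P) <= (N.-1 * P).+1)%N.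
  apply: (leq_trans (size_comp_poly_leq _ _)); rewrite size_polyXn /= ltnS leq_mul2r.
  have := size_newt xw (vals i) 0 N.-1; rewrite -/(TT i) => h.
  by apply/orP; right; move: h; case: (size (TT i)) => //= s h.
have hi : (i < p.-1)%N.
  have hi0 : (i : nat) != p.-1.
    by apply: contra ne => /eqP e; apply/eqP; apply: val_inj.
  have p0 := prime_gt0 hp; move: (ltn_ord i) hi0; move: (nat_of_ord i) => j; lia.
have Q0 := Q_gt0.
move: hT; set s := size _ => hT /=; nia.
Qed.

Lemma norm_lower : pr ^+ N <= norm1 abs t.
Proof.
have h1 : abs (tt2`_(Q * p.-1 + P * N.-1)) <= norm1 abs t.
  rewrite tt2_eq; apply: (pbnd_comp (norm1_ge0 t) (pbnd_norm1 t)).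
  have -> : ('X - 1 : {poly K}) = 'X + (-1)%:P by rewrite polyCN.
  by apply: pbnd_XaddC; rewrite absN abs1.
apply: le_trans h1; rewrite coef_tt2 abs_dd_eq prednK // ler_eXn2l ?pR_gt1 //.
exact: leq_addr.
Qed.


Lemma div_integral (L R0 : {poly K}) : pbnd 1 L -> abs (lead_coef L) = 1 ->
  pbnd 1 (L * R0) -> pbnd 1 R0.
Proof.
move=> hL hlc; elim: (size R0) {-2}R0 (leqnn (size R0)) => [|s IH] R1 hs hF.
  by move: hs; rewrite leqn0 size_poly_eq0 => /eqP ->; apply: pbnd0; rewrite ler01.
have [->|R1nz] := eqVneq R1 0; first by apply: pbnd0; rewrite ler01.
set d := (size R1).-1; set r := lead_coef R1.
have hr : abs r <= 1.

  have := hF (size (L * R1)).-1; rewrite -lead_coefE lead_coefM absM hlc mul1r //.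
set R2 := R1 - r *: 'X^d.
have sR1 : size R1 = d.+1 by rewrite /d prednK // size_poly_gt0.
have hs2 : (size R2 <= s)%N.
  have : (size R2 <= d)%N.
    apply: size_le_coef.
      apply: (leq_trans (size_polyD _ _)); rewrite geq_max sR1 size_polyN.
      by rewrite ltnSn /= (leq_trans (size_scale_leq _ _)) // size_polyXn.
    by rewrite coefB coefZ coefXn eqxx mulr1 /r lead_coefE subrr.
  by move=> h; apply: (leq_trans h); rewrite -ltnS -sR1.
have hr1 : pbnd 1 (r *: 'X^d) by rewrite -[1 : R]mulr1; apply: (pbndW (B := abs r * 1)); rewrite ?ler_wpM2r ?ler01 //; apply: pbndZ; apply: pbndXn; apply: pbndX.
have h2 : pbnd 1 R2.
  apply: IH => //; rewrite /R2 mulrBr; apply: pbndB => //.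
  rewrite -scalerAr; apply: (pbndW (B := abs r * 1)); first by rewrite mulr1.
  by apply: pbndZ; rewrite -[1 : R]mulr1; apply: pbndM; rewrite ?ler01 //; apply: pbndXn; apply: pbndX.
have -> : R1 = R2 + r *: 'X^d by rewrite /R2 subrK.
by apply: pbndD.
Qed.

Lemma lc_cXm1 (c : K) m : c != 0 -> (0 < m)%N -> lead_coef (c *: ('X + 1) ^+ m - 1) = c.
Proof.
move=> c0 m0; rewrite lead_coefDl; last by rewrite size_scale // size_XaddC_exp size_polyN size_poly1 ltnS.
rewrite lead_coefZ.
have : ('X + 1 : {poly K}) ^+ m \is monic by apply: monic_exp; rewrite -[1]polyC1 monicXaddC.
by move/monicP => ->; rewrite mulr1.
Qed.

Lemma abs_lc_xiT k : abs (lead_coef (xiT k)) = 1.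
Proof.
have h := congr1 lead_coef (om_split k); rewrite lead_coefM in h.
have e1 : lead_coef (omn k) = gam k by rewrite /omn om_n_eq W_eq lc_cXm1 ?gam0 ?P_gt0.
have e2 : lead_coef (om1 k) = cc k ^+ Q.
  by rewrite /om1 twist_omega_n1 -(expr1 (yy k)) yy_expr expr1 lc_cXm1 ?Q_gt0 ?expf_neq0 ?cc0.
have := congr1 abs h; rewrite e1 e2 absM /gam !absX abscc !expr1n mul1r.
by move=> <-.
Qed.

Lemma pbnd_xiT k : pbnd 1 (xiT k).
Proof.
rewrite /xiT twist_xi; apply: pbnd_sum => [|i _]; first exact: ler01.
apply: pbndXn; rewrite /yy; apply: pbndXn.
rewrite -[1 : R]mulr1; apply: pbndM; rewrite ?ler01 //; last exact: pbndZ1.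
by apply: pbndC; rewrite ?ler01 ?abscc.
Qed.

Lemma prod_const_seq (c : K) (s : seq nat) : \prod_(k <- s) c = c ^+ size s.
Proof. by elim: s => [|x s IH]; rewrite ?big_nil ?big_cons ?IH ?exprS. Qed.

Lemma ell_XiP : ell = (p%:R ^+ N)^-1 *: XiP.
Proof. by rewrite /ell scaler_prod prod_const_seq size_iota exprVn. Qed.

Lemma pbnd_Rp : beta p N = 0%N -> pbnd 1 Rp.
Proof.
move=> b0; apply: (div_integral (L := XiP)).
- by apply: pbnd_prod => k _; apply: pbnd_xiT.
- by rewrite /XiP lead_coef_prod abs_prod; apply: big1 => k _; apply: abs_lc_xiT.
have e : XiP * Rp = (p%:R ^+ N) *: t.
  rewrite t_Rp ell_XiP -scalerAr scalerA mulfV ?scale1r 1?mulrC //.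
  by rewrite expf_neq0 ?pK0.
rewrite e => i; rewrite coefZ absM absX absp.
have := coef_le_norm1 t i; have := norm_upper; rewrite /Bnd b0 addn0 => h1 h2.
have := le_trans h2 h1 => hx.
have hp0 : 0 < pr ^+ N by rewrite exprn_gt0 // pr_gt0.
by rewrite exprVn mulrC ler_pdivrMr // mul1r.
Qed.


Lemma abs_ua1 : abs (ua - 1) <= (p%:R)^-1.
Proof.
rewrite /ua; case: a => k.
  by rewrite -exprnP; apply: le_trans (abs_pow_sub1 _ hu) hu.
rewrite NegzE -exprnN -exprVn -/ui.
by apply: le_trans (abs_pow_sub1 _ hui) hui.
Qed.

Lemma dvdp_root (d f : {poly K}) x : d %| f -> d.[x] = 0 -> f.[x] = 0.
Proof. by move=> h hd; rewrite -(divpK h) hornerM hd mulr0. Qed.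

Let x0 : K := ua - 1.

Lemma om1_x0 : (om1 0).[x0] = 0.
Proof.
rewrite /om1 twist_omega_n1 /yy hornerD hornerN hornerC horner_exp hornerM hornerC.
by rewrite /Z hornerD hornerX hornerC /x0 subrK /cc expr0 mulr1 mulVf ?ua0 // expr1n subrr.
Qed.

Lemma t_x0 : t.[x0] = 1.
Proof.
have h : (t - 1).[x0] = 0 by apply: dvdp_root (om1_dvd_t1 hN) om1_x0.
by move: h; rewrite hornerD hornerN hornerC => /eqP; rewrite subr_eq0 => /eqP.
Qed.

Lemma abs_ell_x0 : abs ell.[x0] = 1.
Proof.
rewrite /ell horner_prod abs_prod; apply: big1 => k _.
rewrite hornerZ absM abs_pinv /xiT twist_xi horner_sum.
have e : (yy k).[x0] = (ui ^+ k) ^+ Q.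
  rewrite /yy horner_exp hornerM hornerC /Z hornerD hornerX hornerC /x0 subrK /cc.
  by rewrite mulrAC mulVf ?ua0 // mul1r.
under eq_bigr => i _ do rewrite horner_exp e.
rewrite sum_p_abs; last by rewrite -exprM; apply: le_trans (abs_pow_sub1 _ hui) hui.
by rewrite /pr mulfV // pnatr_eq0 -lt0n prime_gt0.
Qed.

Lemma abs_Rp_x0 : abs Rp.[x0] = 1.
Proof.
have := congr1 abs t_x0; rewrite {1}t_Rp hornerM absM abs_ell_x0 mulr1 abs1.
by [].
Qed.

Lemma abs_Rp0 : beta p N = 0%N -> abs Rp`_0 = 1.
Proof.
move=> b0; have hR := pbnd_Rp b0.
have hd : abs (Rp.[x0] - Rp`_0) <= (p%:R)^-1.
  rewrite -horner_coef0 !horner_coef -sumrB; apply: abs_sum_le => [|i _].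
    by rewrite invr_ge0 ler0n.
  rewrite -mulrBr absM; apply: (le_trans (y := 1 * abs (x0 ^+ i - 0 ^+ i))).
    by rewrite ler_wpM2r.
  rewrite mul1r; case: (nat_of_ord i) => [|j]; first by rewrite !expr0 subrr abs00 invr_ge0 ler0n.
  rewrite expr0n /= subr0 absX; apply: le_trans abs_ua1.
  rewrite -[X in _ <= X]expr1; apply: ler_wiXn2l => //.
  by rewrite (le_trans abs_ua1) // ltW // invp_lt1.
have -> : Rp`_0 = Rp.[x0] + (- (Rp.[x0] - Rp`_0)) by rewrite opprB addrC subrK.
rewrite abs_iso abs_Rp_x0 //  absN.
by apply: le_lt_trans hd _; rewrite invp_lt1.
Qed.

Let r0 : K := Rp`_0.
Let EE : {poly K} := 1 - r0^-1 *: Rp.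
Let SS (k : nat) : {poly K} := r0^-1 *: \sum_(j < k.+1) EE ^+ j.
Definition bser (k : nat) : K := (SS k)`_k.

Lemma EE0 : beta p N = 0%N -> EE`_0 = 0.
Proof.
move=> b0; have r00 : r0 != 0 by rewrite -abs_eq0 /r0 abs_Rp0 // oner_eq0.
by rewrite /EE coefB coefZ coef1 /= mulVf // subrr.
Qed.

Lemma EE_low j m : beta p N = 0%N -> (m < j)%N -> (EE ^+ j)`_m = 0.
Proof.
move=> b0 mj.
have hX : 'X %| EE.
  have := dvdp_XsubCl EE 0; rewrite polyC0 subr0 => ->.
  by rewrite /root horner_coef0 EE0.
rewrite -(divpK hX) exprMn coefMXn mj //.
Qed.

Lemma SS_coef k m : beta p N = 0%N -> (m <= k)%N -> (SS k)`_m = (SS m)`_m.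
Proof.
move=> b0; elim: k => [|k IH]; first by rewrite leqn0 => /eqP ->.
rewrite leq_eqVlt => /orP [/eqP ->|h]; first by [].
rewrite /SS big_ord_recr /= scalerDr coefD [(_ *: EE ^+ _)`__]coefZ EE_low // mulr0 addr0.
by rewrite -/(SS k) IH.
Qed.

Lemma psmul_inv : beta p N = 0%N -> psmul (ps_of_poly Rp) bser = ps_one K.
Proof.
move=> b0; apply: functional_extensionality => k.
have r00 : r0 != 0 by rewrite -abs_eq0 /r0 abs_Rp0 // oner_eq0.
rewrite /psmul /ps_of_poly.
transitivity ((Rp * SS k)`_k).
  rewrite coefM; apply: eq_bigr => i _; rewrite /bser SS_coef //.
  by rewrite leq_subr.
have eR : Rp = r0 *: (1 - EE) by rewrite /EE opprB addrC subrK scalerA mulfV // scale1r.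
have -> : Rp * SS k = 1 - EE ^+ k.+1.
  rewrite eR /SS -scalerAl -scalerAr scalerA mulfV // scale1r.
  have := subrX1 EE k.+1; rewrite -[EE ^+ k.+1 - 1]opprB => /eqP; rewrite eqr_oppLR => /eqP ->.
  rewrite -[1 - EE]opprB.
  by rewrite mulNr.
rewrite coefB coef1 EE_low // subr0 /ps_one.
by case: k.
Qed.

Lemma bser_int : beta p N = 0%N -> ps_integral abs bser.
Proof.
move=> b0 k; rewrite /bser.
have r00 : abs r0^-1 = 1 by rewrite absV /r0 abs_Rp0 // invr1.
suff : pbnd 1 (SS k) by move/(_ k).
rewrite /SS -[1 : R]mulr1; apply: (pbndW (B := abs r0^-1 * 1)); first by rewrite r00.
apply: pbndZ; apply: pbnd_sum => [|j _]; first exact: ler01.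
apply: pbndXn; rewrite /EE; apply: pbndB; first by apply: pbndC; rewrite ?abs1 ?ler01.
rewrite -[1 : R]mulr1; apply: (pbndW (B := abs r0^-1 * 1)); first by rewrite r00.
by apply: pbndZ; apply: pbnd_Rp.
Qed.

Lemma part5 : beta p N = 0%N ->
  exists g : nat -> K, ps_Zp_unit abs g /\
    ps_of_poly t = psmul g (ps_of_poly (ellS p u n (Zinterval a N))).
Proof.
move=> b0; exists (ps_of_poly Rp); split.
  split; first by move=> k; apply: pbnd_Rp.
  by exists bser; split; [apply: bser_int | apply: psmul_inv].
apply: functional_extensionality => k.
by rewrite /ps_of_poly /psmul ellS_eq {1}t_Rp coefM.
Qed.


Lemma main_local : let J := Zinterval a N in
  [/\ exists Rp0 : {poly K},
        is_inv_mod (ellS p u n J) (omegaS p u n.-1 J) Rp0 /\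
        t = Rp0 * ellS p u n J,
      (omegaS p u n J %/ omegaS p u n.-1 J) %| t,
      omegaS p u n.-1 J %| (t - 1),
      (p%:R ^+ N <= norm1 abs t /\ norm1 abs t <= p%:R ^+ (N + beta p N))
    & (beta p N = 0%N ->
        exists g : nat -> K, ps_Zp_unit abs g /\
          ps_of_poly t = psmul g (ps_of_poly (ellS p u n J)))].
Proof.
split; [exact: part1 | exact: part2 | exact: part3 | | exact: part5].
by split; [exact: norm_lower | exact: norm_upper].
Qed.

End Main.

Theorem mainTheorem1
  (p : nat) (hp : prime p) (hodd : odd p)
  (K : fieldType) (R : realType) (abs : K -> R) (hK : is_Qp p abs)
  (u : K) (hu : abs (u - 1) <= abs (p%:R)) (hu1 : u != 1)
  (a : int) (N : nat) (hN : (1 <= N)%N)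
  (n : nat) (hn : (1 <= n)%N)
  (t : {poly K})
  (ht_deg : (size t <= p ^ n * N)%N)
  (ht_cong : forall j, j \in Zinterval a N ->
      twist u j (omega K p n) %| (t - (p%:R)^-1 *: twist u j (xi K p n))) :
  let J := Zinterval a N in
  [/\ exists Rp : {poly K},
        is_inv_mod (ellS p u n J) (omegaS p u n.-1 J) Rp /\
        t = Rp * ellS p u n J,
      (omegaS p u n J %/ omegaS p u n.-1 J) %| t,
      omegaS p u n.-1 J %| (t - 1),
      (p%:R ^+ N <= norm1 abs t /\ norm1 abs t <= p%:R ^+ (N + beta p N))
    & (beta p N = 0%N ->
        exists g : nat -> K, ps_Zp_unit abs g /\
          ps_of_poly t = psmul g (ps_of_poly (ellS p u n J)))].
Proof.
case: hK => abs0 absge0 absM absD [absp _ _].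
rewrite absp in hu.
exact: (main_local hp hodd abs0 absge0 absM absD absp hu hu1 hN hn ht_deg ht_cong).
Qed.
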